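(* Let $N\ge1$. The entries of the matrices $\mathbf D$ and $\mathbf D^\dagger$ satisfy $$D_{ij}=-D^\dagger_{N+1-i,\,N+1-j},\qquad 1\le i\le N,\ 1\le j\le N.$$ Equivalently, $\mathbf D_{1:N}=-\mathbf J\mathbf D^\dagger_{1:N}\mathbf J$, where $\mathbf J$ is the $N\times N$ exchange matrix with ones on its counterdiagonal and zeros elsewhere.
   Context: $-1<\tau_1<\dots<\tau_N<1$ are the $N$ Gauss quadrature abscissas (roots of the degree-$N$ Legendre polynomial), $\omega_1,\dots,\omega_N$ the Gauss quadrature weights, $\tau_0=-1$, $\tau_{N+1}=1$. For $1\le i\le N$, $0\le j\le N$, $D_{ij}=\dot L_j(\tau_i)$ with $L_j(\tau)=\prod_{k=0,k\ne j}^N\frac{\tau-\tau_k}{\tau_j-\tau_k}$. For $1\le i,j\le N$, $D^\dagger_{ij}=-(\omega_j/\omega_i)D_{ji}$, and $D^\dagger_{i,N+1}=-\sum_{j=1}^ND^\dagger_{ij}$. $\mathbf D_{1:N}=(D_{ij})_{1\le i,j\le N}$ and $\mathbf D^\dagger_{1:N}=(D^\dagger_{ij})_{1\le i,j\le N}$. *)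

(* Defs.v *)
From HB Require Import structures.
From mathcomp Require Import all_boot all_order all_algebra.
Set Implicit Arguments. Unset Strict Implicit. Unset Printing Implicit Defensive.
Import Order.TTheory GRing.Theory Num.Theory.
Local Open Scope ring_scope.

Section Defs.
Variable R : rcfType.

Definition legendre (n : nat) : {poly R} :=
  ((2 ^ n * n`!)%:R)^-1 *: (('X ^+ 2 - 1) ^+ n)^`(n).

Definition lagrange (m : nat) (t : 'I_m -> R) (j : 'I_m) : {poly R} :=
  \prod_(k < m | k != j) (('X - (t k)%:P) * ((t j - t k)^-1)%:P).

Definition poly_integral (p : {poly R}) (a b : R) : R :=
  \sum_(i < size p) p`_i * (b ^+ i.+1 - a ^+ i.+1) / (i.+1)%:R.

Definition gauss_weight (N : nat) (tau : 'I_N -> R) (j : 'I_N) : R :=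
  poly_integral (lagrange tau j) (-1) 1.

(* extended nodes: index 0 is tau_0 = -1, index k+1 is tau_{k+1} *)
Definition ext_nodes (N : nat) (tau : 'I_N -> R) (k : 'I_N.+1) : R :=
  if unlift ord0 k is Some k' then tau k' else -1.

(* D_{1:N}: entry (i,j) (0-based) is D_{i+1,j+1} = dL_{j+1}/dt (tau_{i+1}),
   L over the nodes tau_0 = -1, tau_1, ..., tau_N *)
Definition Dmat (N : nat) (tau : 'I_N -> R) : 'M[R]_N :=
  \matrix_(i < N, j < N) (lagrange (ext_nodes tau) (lift ord0 j))^`().[tau i].

Definition Ddag (N : nat) (tau : 'I_N -> R) : 'M[R]_N :=
  \matrix_(i < N, j < N) (- (gauss_weight tau j / gauss_weight tau i) * Dmat tau j i).

End Defs.

(* Main.v *)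
Require Import Defs.
From HB Require Import structures.
From mathcomp Require Import all_boot all_order all_algebra.
From mathcomp Require Import polyrcf.
From mathcomp Require Import ring zify.
Import Order.TTheory GRing.Theory Num.Theory.
Local Open Scope ring_scope.


Section Integ.
Variable R : rcfType.
Implicit Types p q : {poly R}.

Lemma pint_ext n p (a b : R) : (size p <= n)%N ->
  poly_integral p a b = \sum_(i < n) p`_i * (b ^+ i.+1 - a ^+ i.+1) / (i.+1)%:R.
Proof.
move=> hn; rewrite /poly_integral.
rewrite -!(big_mkord xpredT (fun i => p`_i * (b ^+ i.+1 - a ^+ i.+1) / (i.+1)%:R)).
rewrite (big_cat_nat (n := size p) (leq0n _) hn) /= [X in _ = _ + X]big1_seq ?addr0 //.
move=> i /andP[_]; rewrite mem_index_iota => /andP[hi _].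
by rewrite nth_default // !mul0r.
Qed.

Lemma pint0 a b : poly_integral (0 : {poly R}) a b = 0.
Proof. by rewrite /poly_integral size_poly0 big_ord0. Qed.

Lemma pintD p q a b : poly_integral (p + q) a b = poly_integral p a b + poly_integral q a b.
Proof.
set n := maxn (size p) (size q).
rewrite (pint_ext _ _ _ _ (size_polyD p q)) (pint_ext n p a b) ?leq_maxl //.
rewrite (pint_ext n q a b) ?leq_maxr // -big_split /=.
by apply: eq_bigr => i _; rewrite coefD !mulrDl.
Qed.

Lemma pintZ c p a b : poly_integral (c *: p) a b = c * poly_integral p a b.
Proof.
rewrite (pint_ext _ _ _ _ (size_scale_leq c p)) /poly_integral mulr_sumr.
by apply: eq_bigr => i _; rewrite coefZ !mulrA.
Qed.

Lemma pintN p a b : poly_integral (- p) a b = - poly_integral p a b.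
Proof. by rewrite -scaleN1r pintZ mulN1r. Qed.

Lemma pintB p q a b : poly_integral (p - q) a b = poly_integral p a b - poly_integral q a b.
Proof. by rewrite pintD pintN. Qed.

Lemma pint_sum (I : finType) (F : I -> {poly R}) a b :
  poly_integral (\sum_i F i) a b = \sum_i poly_integral (F i) a b.
Proof.
apply: (big_morph (fun p => poly_integral p a b)); first by move=> ??; apply: pintD.
exact: pint0.
Qed.

Lemma size_deriv_le p : (size p^`() <= (size p).-1)%N.
Proof. by rewrite /deriv; apply: size_poly. Qed.

Lemma pint_deriv p a b : poly_integral p^`() a b = p.[b] - p.[a].
Proof.
rewrite (pint_ext _ _ _ _ (size_deriv_le p)) !horner_coef -sumrB.
case: (size p) => [|m]; first by rewrite !big_ord0.
rewrite big_ord_recl /= !expr0 subrr add0r.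
apply: eq_bigr => i _; rewrite /bump /= add1n coef_deriv -[p`_i.+1 *+ _]mulr_natr mulrAC mulfK.
  by rewrite mulrBr.
by rewrite pnatr_eq0.
Qed.

Lemma antideriv p : exists Q, Q^`() = p.
Proof.
exists (\poly_(i < (size p).+1) (if i is k.+1 then p`_k / (k.+1)%:R else 0)).
apply/polyP => i; rewrite coef_deriv coef_poly ltnS.
case: ltnP => hi.
  by rewrite -[_ *+ i.+1]mulr_natr -mulrA mulVf ?mulr1 // pnatr_eq0.
by rewrite mul0rn nth_default.
Qed.

Lemma pint_antider p Q a b : Q^`() = p -> poly_integral p a b = Q.[b] - Q.[a].
Proof. by move<-; apply: pint_deriv. Qed.

Lemma derivNX : (- 'X : {poly R})^`() = -1.
Proof. by rewrite derivN derivX. Qed.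

Lemma pint_compN p : poly_integral (p \Po (- 'X)) (-1) 1 = poly_integral p (-1) 1.
Proof.
have [Q hQ] := antideriv p.
rewrite (pint_antider _ _ (-1) 1 hQ).
rewrite (pint_antider _ (- (Q \Po (- 'X)))).
  by rewrite !hornerN !horner_comp !hornerN !hornerX !opprK addrC.
by rewrite (derivN (Q \Po - 'X)) deriv_comp hQ derivNX mulrN1 opprK.
Qed.
End Integ.


Section Lag.
Variable R : rcfType.

Lemma size_prod_le2 {I : Type} (r : seq I) (P : pred I) (F : I -> {poly R}) :
  (forall i, P i -> (size (F i) <= 2)%N) ->
  (size (\prod_(i <- r | P i) F i)%R <= (count P r).+1)%N.
Proof.
move=> hF; elim: r => [|x r IH]; first by rewrite big_nil size_poly1.
rewrite big_cons /=; case: ifP => Px /=; last by rewrite add0n.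
apply: leq_trans (size_polyMleq _ _) _.
have := hF x Px; move: IH; rewrite add1n; case: (size (F x)) => [|a]; case: (size _) => [|b] /=; lia.
Qed.

Variable m : nat.
Variable t : 'I_m -> R.
Hypothesis tinj : injective t.

Lemma lag_eval j k : (Defs.lagrange t j).[t k] = (k == j)%:R.
Proof.
rewrite /Defs.lagrange horner_prod.
have [->|hkj] := eqVneq k j.
  rewrite big1 // => i hij; rewrite hornerM hornerXsubC hornerC divff //.
  rewrite subr_eq0; apply/eqP => /tinj h; by rewrite h eqxx in hij.
by rewrite (bigD1 k hkj) /= hornerM hornerXsubC subrr !mul0r.
Qed.

Lemma lag_size j : (size (Defs.lagrange t j) <= m)%N.
Proof.
rewrite /Defs.lagrange.
have H := size_prod_le2 (I := 'I_m) (index_enum 'I_m) (fun k => k != j)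
   (fun k => ('X - (t k)%:P) * ((t j - t k)^-1)%:P).
apply: leq_trans (H _) _.
  move=> i _; apply: leq_trans (size_polyMleq _ _) _.
  by rewrite size_XsubC; have := size_polyC_leq1 ((t j - t i)^-1); case: (size _) => [|[|]].
have := count_predC (fun k : 'I_m => k != j) (index_enum 'I_m).
have : (0 < count (predC (fun k : 'I_m => k != j)) (index_enum 'I_m))%N.
  by rewrite -has_count; apply/hasP; exists j; rewrite ?mem_index_enum //= negbK.
have -> : size (index_enum 'I_m) = m by rewrite -[index_enum _]filter_predT deprecated_filter_index_enum -cardE card_ord.
lia.
Qed.

Lemma sum_delta (F : 'I_m -> R) k : \sum_i F i * (k == i)%:R = F k.
Proof.
rewrite (bigD1 k) //= eqxx mulr1 big1 ?addr0 // => i hi.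
by rewrite eq_sym (negbTE hi) mulr0.
Qed.

Lemma lag_interp (p : {poly R}) : (size p <= m)%N -> p = \sum_k p.[t k] *: Defs.lagrange t k.
Proof.
move=> hp; apply/eqP; rewrite -subr_eq0; apply/eqP.
apply: (roots_geq_poly_eq0 (rs := map t (enum 'I_m))).
- apply/allP => x /mapP [k _ ->]; rewrite rootE hornerD hornerN horner_sum.
  under eq_bigr => i _ do rewrite hornerZ lag_eval.
  by rewrite sum_delta subrr.
- by rewrite map_inj_uniq ?enum_uniq.
- rewrite size_map size_enum_ord; apply: leq_trans (size_polyD _ _) _.
  rewrite size_polyN geq_max hp /=.
  apply: (big_ind (fun q : {poly R} => size q <= m)%N) => //.
  + by rewrite size_poly0.
  + by move=> x y hx hy; apply: leq_trans (size_polyD _ _) _; rewrite geq_max hx hy.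
  + by move=> i _; apply: leq_trans (size_scale_leq _ _) _; apply: lag_size.
Qed.
End Lag.


Section Leg.
Variable R : rcfType.

Lemma mult_der (a : R) k : forall n (g : {poly R}), (k <= n)%N ->
  exists h, (('X - a%:P) ^+ n * g)^`(k) = ('X - a%:P) ^+ (n - k) * h /\
            (g.[a] != 0 -> h.[a] != 0).
Proof.
elim: k => [|k IH] n g hk.
  by exists g; rewrite derivn0 subn0.
case: n hk => [//|n] hk.
have e : (('X - a%:P) ^+ n.+1 * g)^`() =
   ('X - a%:P) ^+ n * (g *+ n.+1 + ('X - a%:P) * g^`()).
  by rewrite derivM deriv_exp derivXsubC mul1r /= mulrDr mulrnAl mulrnAr mulrA -exprSr.
have [h [eh hh]] := IH n (g *+ n.+1 + ('X - a%:P) * g^`()) hk.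
exists h; rewrite derivSn e eh subSS; split => // ga.
apply: hh; rewrite hornerD hornerMn hornerM hornerXsubC subrr mul0r addr0.
by rewrite mulrn_eq0 negb_or ga.
Qed.

Let f N : {poly R} := ('X ^+ 2 - 1) ^+ N.

Lemma f_fact N : f N = ('X - 1%:P) ^+ N * ('X - (-1)%:P) ^+ N.
Proof.
rewrite /f -exprMn; congr (_ ^+ _).
rewrite polyCN polyC1; ring.
Qed.

Lemma f_fact' N : f N = ('X - (-1)%:P) ^+ N * ('X - 1%:P) ^+ N.
Proof. by rewrite f_fact mulrC. Qed.

Lemma root_dern N k : (k < N)%N -> (f N)^`(k).[1] = 0 /\ (f N)^`(k).[-1] = 0.
Proof.
move=> hk; split.
  have [h [eh _]] := mult_der 1 k N (('X - (-1)%:P) ^+ N) (ltnW hk).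
  rewrite f_fact eh.
  have hz : (N - k == 0)%N = false by apply/negbTE; lia.
  rewrite hornerM horner_exp hornerXsubC subrr expr0n hz; exact: mul0r.
have [h [eh _]] := mult_der (-1) k N (('X - 1%:P) ^+ N) (ltnW hk).
rewrite f_fact' eh.
have hz : (N - k == 0)%N = false by apply/negbTE; lia.
  rewrite hornerM horner_exp hornerXsubC subrr expr0n hz; exact: mul0r.
Qed.

Lemma legE N : legendre R N = ((2 ^ N * N`!)%:R)^-1 *: (f N)^`(N).
Proof. by []. Qed.

Lemma leg_m1 N : (legendre R N).[-1] != 0.
Proof.
rewrite legE hornerZ mulf_eq0 negb_or invr_eq0 pnatr_eq0 muln_eq0 negb_or.
rewrite expn_eq0 /= -lt0n fact_gt0 /=.
have [h [eh hh]] := mult_der (-1) N N (('X - 1%:P) ^+ N) (leqnn N).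
rewrite f_fact' eh subnn expr0 mul1r hh //.
rewrite horner_exp hornerXsubC expf_neq0 //.
rewrite -opprD oppr_eq0 -[1 + 1]/(2%:R) pnatr_eq0 //.
Qed.

Lemma size_f N : (size (f N) <= (N + N).+1)%N.
Proof.
rewrite f_fact; apply: leq_trans (size_polyMleq _ _) _.
by rewrite !size_exp_XsubC addSn addnS.
Qed.

Lemma size_leg N : (size (legendre R N) <= N.+1)%N.
Proof.
rewrite legE; apply: leq_trans (size_scale_leq _ _) _.
apply/leq_sizeP => j hj; rewrite coef_derivn nth_default ?mul0rn //.
apply: leq_trans (size_f N) _; lia.
Qed.

Lemma orth_k N k : (k <= N)%N -> forall q : {poly R}, (size q <= k)%N ->
  poly_integral (q * (f N)^`(k)) (-1) 1 = 0.
Proof.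
elim: k => [|k IH] hk q hq.
  by move: hq; rewrite size_poly_leq0 => /eqP ->; rewrite mul0r pint0.
have e : q * (f N)^`(k.+1) = (q * (f N)^`(k))^`() - q^`() * (f N)^`(k).
  by rewrite derivnS derivM addrAC subrr add0r.
have [r1 r2] := root_dern _ _ hk.
rewrite e pintB pint_deriv !hornerM r1 r2 !mulr0 subrr IH ?subr0 //; first lia.
apply: leq_trans (size_deriv_le _ q) _; lia.
Qed.

Lemma orth N (q : {poly R}) : (size q <= N)%N -> poly_integral (q * legendre R N) (-1) 1 = 0.
Proof.
by move=> hq; rewrite legE -scalerAr pintZ orth_k // mulr0.
Qed.

End Leg.


Section Pos.
Variable R : rcfType.

Lemma pos_int (s : {poly R}) : s != 0 -> poly_integral (s * s) (-1) 1 != 0.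
Proof.
move=> s0; have [Q hQ] := antideriv _ (s * s).
rewrite (pint_antider _ _ _ _ _ hQ) subr_eq0.
have mono : forall x y, x <= y -> Q.[x] <= Q.[y].
  move=> x y; rewrite le_eqVlt => /orP [/eqP -> // | hxy].
  have [c _ e] := poly_mvt Q hxy.
  by rewrite -subr_ge0 e hQ hornerM -expr2 mulr_ge0 ?sqr_ge0 ?subr_ge0 ?ltW.
apply/negP => /eqP e1.
have hc : forall x, -1 <= x -> x <= 1 -> Q.[x] = Q.[-1].
  move=> x h1 h2; apply/le_anti/andP; split; [rewrite -e1; exact: mono | exact: mono].
have Q0 : Q - (Q.[-1])%:P = 0.
  apply: (roots_geq_poly_eq0 (rs := [seq ((i.+1)%:R)^-1 | i <- iota 0 (size Q).+1])).
  - apply/allP => x /mapP [i _ ->]; rewrite rootE hornerD hornerN hornerC hc ?subrr //.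
      by apply: le_trans (lerN10 _) _; rewrite invr_ge0 ler0n.
    by rewrite invf_le1 ?ltr0Sn // ler1n.
  - rewrite map_inj_uniq ?iota_uniq // => i j /invr_inj /eqP.
    by rewrite eqr_nat eqSS => /eqP.
  - rewrite size_map size_iota; apply: leq_trans (size_polyD _ _) _.
    rewrite size_polyN geq_max leqnSn /=.
    by apply: leq_trans (size_polyC_leq1 _) _.
have : s * s = 0.
  by rewrite -hQ; move/eqP: Q0; rewrite subr_eq0 => /eqP ->; rewrite derivC.
by move/eqP; rewrite mulf_eq0 orbb (negbTE s0).
Qed.

Lemma derivn_compN (p : {poly R}) n :
  (p \Po (- 'X))^`(n) = (-1) ^+ n *: (p^`(n) \Po (- 'X)).
Proof.
elim: n => [|n IH]; first by rewrite !derivn0 expr0 scale1r.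
rewrite !derivnS IH derivZ deriv_comp derivNX mulrN1 exprS -scalerA scaleN1r.
by rewrite scalerN.
Qed.

Lemma comp_exp (p q : {poly R}) n : (p ^+ n) \Po q = (p \Po q) ^+ n.
Proof.
elim: n => [|n IH]; first by rewrite !expr0 -polyC1 comp_polyC.
by rewrite !exprS comp_polyM IH.
Qed.

Lemma leg_even N : legendre R N \Po (- 'X) = (-1) ^+ N *: legendre R N.
Proof.
set f := ('X ^+ 2 - 1 : {poly R}) ^+ N.
have fe : f \Po (- 'X) = f.
  rewrite /f comp_exp comp_polyB comp_exp comp_polyX -polyC1 comp_polyC.
  by rewrite sqrrN.
have e := derivn_compN f N; rewrite fe in e.
have e2 : f^`(N) \Po (- 'X) = (-1) ^+ N *: f^`(N).
  rewrite {2}e scalerA -exprMn mulrN1 opprK expr1n scale1r //.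
rewrite legE comp_polyZ -/f e2 !scalerA mulrC //.
Qed.

Lemma leg_root_sym N x : root (legendre R N) x -> root (legendre R N) (- x).
Proof.
rewrite !rootE => /eqP h.
have := congr1 (fun p => p.[x]) (leg_even N).
by rewrite /= horner_comp hornerN hornerX => ->; rewrite hornerZ h mulr0.
Qed.
End Pos.


Lemma dec_rev N (f : 'I_N -> 'I_N) :
  (forall i j : 'I_N, (i < j)%N -> (f j < f i)%N) -> forall i, f i = rev_ord i.
Proof.
move=> hf.
have A : forall n (i : 'I_N), nat_of_ord i = n -> (f i + n < N)%N.
  elim=> [|n IH] i hi; first by rewrite addn0.
  have hn : (n < N)%N by apply: ltnW; rewrite -hi ltn_ord.
  have := IH (Ordinal hn) erefl; have := hf (Ordinal hn) i; rewrite /= hi => h; have := h (ltnSn n).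
  lia.
have B : forall n (i : 'I_N), (nat_of_ord i + n = N.-1)%N -> (N.-1 <= f i + i)%N.
  elim=> [|n IH] i hi; first by rewrite addn0 in hi; rewrite hi leq_addl.
  have hn : (i.+1 < N)%N by have := ltn_ord i; lia.
  have := IH (Ordinal hn) ltac:(rewrite /=; lia); have := hf i (Ordinal hn) (ltnSn i).
  rewrite /=; lia.
move=> i; apply: val_inj => /=.
have := A i i erefl; have := B (N.-1 - i)%N i ltac:(have := ltn_ord i; lia); have := ltn_ord i.
lia.
Qed.

Section Main.
Variable R : rcfType.
Variable N : nat.
Variable tau : 'I_N -> R.
Hypothesis hinc : forall i j : 'I_N, (i < j)%N -> tau i < tau j.
Hypothesis hroot : forall i : 'I_N, root (legendre R N) (tau i).

Local Notation P := (legendre R N).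
Local Notation I p := (poly_integral p (-1) 1).

Lemma tau_inj : injective tau.
Proof.
move=> i j e; apply: val_inj; case: (ltngtP i j) => // h.
- by have := hinc _ _ h; rewrite e ltxx.
- by have := hinc _ _ h; rewrite e ltxx.
Qed.

Lemma tau_mono (i j : 'I_N) : (i <= j)%N -> tau i <= tau j.
Proof.
rewrite leq_eqVlt => /orP [/eqP h | h]; last exact/ltW/(hinc _ _ h).
by rewrite (val_inj h).
Qed.

Lemma P_neq0 : P != 0.
Proof. by apply: contraNneq (leg_m1 R N) => ->; rewrite horner0. Qed.

Lemma tau_neqm1 (k : 'I_N) : tau k != -1.
Proof.
apply: contraNneq (leg_m1 R N) => <-; exact: hroot.
Qed.

Lemma size_P : size P = N.+1.
Proof.
apply/eqP; rewrite eqn_leq size_leg /=.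
have hd : (\prod_(z <- map tau (enum 'I_N)) ('X - z%:P)) %| P.
  apply: uniq_roots_dvdp; first by apply/allP => x /mapP [k _ ->].
  by rewrite uniq_rootsE map_inj_uniq ?enum_uniq //; apply: tau_inj.
have := dvdp_leq P_neq0 hd.
by rewrite size_prod_XsubC size_map size_enum_ord.
Qed.

Local Notation w k := (gauss_weight tau k).

Lemma quad (p : {poly R}) : (size p <= N + N)%N -> I p = \sum_k w k * p.[tau k].
Proof.
move=> hp.
have hr : (size (p %% P)%R <= N)%N.
  by have := ltn_modp p P; rewrite P_neq0 size_P.
rewrite {1}(divp_eq p P) pintD orth ?add0r; last first.
  by rewrite size_divp ?P_neq0 // size_P /= leq_subLR.
rewrite {1}(lag_interp _ _ _ tau_inj _ hr) pint_sum.
apply: eq_bigr => k _; rewrite pintZ mulrC /gauss_weight.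
by congr (_ * _); rewrite [in RHS](divp_eq p P) hornerD hornerM (eqP (hroot k)) mulr0 add0r.
Qed.

Local Notation l := (Defs.lagrange tau).

Lemma sumd1 (F G : 'I_N -> R) k : \sum_i F i * ((i == k)%:R * G i) = F k * G k.
Proof.
rewrite (bigD1 k) //= eqxx mul1r big1 ?addr0 // => i hi.
by rewrite (negbTE hi) mul0r mulr0.
Qed.

Lemma sumd2 (F G : 'I_N -> R) k : \sum_i F i * (G i * (i == k)%:R) = F k * G k.
Proof.
rewrite (bigD1 k) //= eqxx mulr1 big1 ?addr0 // => i hi.
by rewrite (negbTE hi) !mulr0.
Qed.

Lemma w_neq0 k : w k != 0.
Proof.
have l0 : l k != 0.
  apply/eqP => h; have := lag_eval _ _ _ tau_inj k k.
  rewrite h horner0 eqxx => /esym/eqP; rewrite oner_eq0 //.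
have := pos_int _ _ l0; rewrite quad.
  under eq_bigr => i _ do rewrite hornerM (lag_eval _ _ _ tau_inj).
  by rewrite sumd1 eqxx mulr1.
apply: leq_trans (size_polyMleq _ _) _.
by apply: leq_trans (leq_pred _) _; rewrite leq_add ?lag_size.
Qed.

Lemma ex_neg i : [exists k, tau k == - tau i].
Proof.
have [//|/existsPn H] := boolP [exists k, tau k == - tau i].
have : P = 0.
  apply: (roots_geq_poly_eq0 (rs := - tau i :: map tau (enum 'I_N))).
  - rewrite /= leg_root_sym ?hroot //=.
    by apply/allP => x /mapP [k _ ->].
  - rewrite /= map_inj_uniq ?enum_uniq ?andbT; last exact: tau_inj.
    by apply/mapP => -[k _ /esym/eqP]; rewrite (negbTE (H k)).
  - by rewrite /= size_map size_enum_ord size_leg.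
by move=> h; move: P_neq0; rewrite h eqxx.
Qed.

Definition sig i := odflt i [pick k | tau k == - tau i].

Lemma tau_sig i : tau (sig i) = - tau i.
Proof.
rewrite /sig; case: pickP => [k /eqP //| H].
by have /existsP [k hk] := ex_neg i; rewrite H in hk.
Qed.

Lemma tau_rev i : tau (rev_ord i) = - tau i.
Proof.
suff -> : rev_ord i = sig i by rewrite tau_sig.
apply/esym/dec_rev => {}i j hij.
rewrite ltnNge; apply/negP => h; have := tau_mono _ _ h.
by rewrite !tau_sig lerN2 leNgt (hinc _ _ hij).
Qed.

Lemma w_sym j : w (rev_ord j) = w j.
Proof.
have e : l (rev_ord j) \Po (- 'X) = l j.
  have hs : (size (l (rev_ord j) \Po (- 'X)) <= N)%N.
    by rewrite size_comp_poly2 ?size_polyN ?size_polyX // lag_size.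
  rewrite (lag_interp _ _ _ tau_inj _ hs).
  under eq_bigr => k _ do rewrite horner_comp hornerN hornerX -tau_rev (lag_eval _ _ _ tau_inj) (inj_eq rev_ord_inj).
  rewrite (bigD1 j) //= eqxx scale1r big1 ?addr0 // => k hk.
  by rewrite (negbTE hk) scale0r.
by rewrite /gauss_weight -e pint_compN.
Qed.

Local Notation en := (ext_nodes tau).

Lemma en_lift k : en (lift ord0 k) = tau k.
Proof. by rewrite /ext_nodes liftK. Qed.

Lemma en_0 : en ord0 = -1.
Proof. by rewrite /ext_nodes unlift_none. Qed.

Lemma en_inj : injective en.
Proof.
move=> x y; case: (unliftP ord0 x) => [x'|] ->; case: (unliftP ord0 y) => [y'|] ->;
  rewrite ?en_lift ?en_0 //.
- by move/tau_inj ->.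
- by move=> e; have := tau_neqm1 x'; rewrite e eqxx.
- by move=> e; have := tau_neqm1 y'; rewrite -e eqxx.
Qed.

Local Notation L j := (Defs.lagrange en (lift ord0 j)).

Lemma L_eval j k : (L j).[tau k] = (k == j)%:R.
Proof. by rewrite -en_lift (lag_eval _ _ _ en_inj) (inj_eq (@lift_inj _ ord0)). Qed.

Lemma L_m1 j : (L j).[-1] = 0.
Proof. by rewrite -en_0 (lag_eval _ _ _ en_inj) (negbTE (neq_lift _ _)). Qed.

Lemma DmatE i j : Dmat tau i j = (L j)^`().[tau i].
Proof. by rewrite /Dmat mxE. Qed.

Lemma predD_le a b n : (a <= n)%N -> (b <= n.+1)%N -> ((a + b).-1 <= n + n)%N.
Proof. move=> h1 h2; rewrite -subn1; lia. Qed.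

Lemma mainP i j : Dmat tau i j = - Ddag tau (rev_ord i) (rev_ord j).
Proof.
set M := L (rev_ord i) \Po (- 'X).
have M_eval k : M.[tau k] = (k == i)%:R.
  by rewrite horner_comp hornerN hornerX -tau_rev L_eval (inj_eq rev_ord_inj).
have M_1 : M.[1] = 0 by rewrite horner_comp hornerN hornerX L_m1.
have M_size : (size M <= N.+1)%N.
  by rewrite size_comp_poly2 ?size_polyN ?size_polyX // lag_size.
have M_der k : M^`().[tau k] = - (L (rev_ord i))^`().[tau (rev_ord k)].
  by rewrite deriv_comp derivNX mulrN1 hornerN horner_comp hornerN hornerX tau_rev.
have Ls : (size (L j) <= N.+1)%N by apply: lag_size.
have s1 : (size ((L j)^`() * M)%R <= N + N)%N.
  apply: leq_trans (size_polyMleq _ _) _; apply: predD_le => //.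
  by apply: leq_trans (size_deriv_le _ _) _; rewrite -ltnS; case: (size _) Ls.
have s2 : (size (L j * M^`())%R <= N + N)%N.
  rewrite mulrC; apply: leq_trans (size_polyMleq _ _) _; apply: predD_le => //.
  by apply: leq_trans (size_deriv_le _ _) _; rewrite -ltnS; case: (size _) M_size.
have key : w i * Dmat tau i j = w j * Dmat tau (rev_ord j) (rev_ord i).
  have h0 : I ((L j * M)^`()) = 0.
    by rewrite pint_deriv !hornerM M_1 L_m1 mulr0 mul0r subrr.
  move: h0; rewrite derivM pintD (quad _ s1) (quad _ s2).
  under eq_bigr => k _ do rewrite hornerM M_eval.
  under [X in _ + X = 0]eq_bigr => k _ do rewrite hornerM L_eval M_der.
  rewrite sumd2 sumd1 !DmatE mulrN => /eqP; rewrite subr_eq0 => /eqP //.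
rewrite [in RHS]/Ddag [in RHS]mxE !w_sym mulNr opprK.
apply: (mulfI (w_neq0 i)); rewrite key mulrA mulrCA divff ?mulr1 //; exact: w_neq0.
Qed.
End Main.

Theorem proposition9p1 (R : rcfType) (N : nat) (tau : 'I_N -> R) :
  (1 <= N)%N ->
  (forall i j : 'I_N, (i < j)%N -> tau i < tau j) ->
  (forall i : 'I_N, root (legendre R N) (tau i)) ->
  forall i j : 'I_N, Dmat tau i j = - Ddag tau (rev_ord i) (rev_ord j).
Proof.
move=> _ hinc hroot i j; exact: (mainP _ _ _ hinc hroot i j).
Qed.
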